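(* For $m\leq n$, the module $\mathcal P_n/J_m$ is free as a right $R\mathfrak S_m$-module.
   Context: $R$ is a commutative ring, $\delta\in R$, and $\mathcal P_n=\mathcal P_n(R,\delta)$ is the partition algebra: the free $R$-module on set partitions (''diagrams'') of $\{-n,\dots,-1,1,\dots,n\}$ (negative = left nodes, positive = right nodes), with product by stacking, taking the induced partition on outer nodes, and multiplying by $\delta$ for each component consisting only of middle nodes. $J_m\subseteq\mathcal P_n$ is the left ideal spanned by all diagrams in which, among the right nodes $n-m+1,\dots,n$, there is at least one singleton block or at least one pair of distinct nodes in the same block. $R\mathfrak S_m$ acts on the right of $\mathcal P_n$ via $R\mathfrak S_m\subseteq\mathcal P_m\subseteq\mathcal P_n$, where $\mathcal P_m\subseteq\mathcal P_n$ by relabelling $\pm i\mapsto\pm(n-m+i)$ and adjoining blocks $\{-i,i\}$ for $1\leq i\leq n-m$, and $\mathfrak S_m\subseteq\mathcal P_m$ as the permutation diagrams (all blocks of the form $\{-i,j\}$); this action preserves $J_m$. *)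

(* Defs.v *)
From HB Require Import structures.
From mathcomp Require Import all_boot all_order all_algebra all_fingroup.
Set Implicit Arguments. Unset Strict Implicit. Unset Printing Implicit Defensive.
Import GRing.Theory.
Local Open Scope ring_scope.

(* Nodes of a partition diagram for P_n:  (false, i) is the left node -(i+1),
   (true, i) is the right node (i+1), for i : 'I_n. *)
Definition node (n : nat) := (bool * 'I_n)%type.

Definition is_diagram n (D : {set {set node n}}) : bool := partition D [set: node n].
Definition diagram n := {D : {set {set node n}} | is_diagram D}.

Definition same_block n (D : {set {set node n}}) (x y : node n) : bool :=
  y \in pblock D x.

(* Stacking: three rows of n nodes; row 0 = left nodes of the first factor,
   row 1 = middle (right nodes of the first = left nodes of the second),
   row 2 = right nodes of the second factor. *)
Definition tnode (n : nat) := ('I_3 * 'I_n)%type.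
Definition row0 : 'I_3 := @Ordinal 3 0 isT.
Definition row1 : 'I_3 := @Ordinal 3 1 isT.
Definition row2 : 'I_3 := @Ordinal 3 2 isT.
Definition top_emb n (x : node n) : tnode n := (if x.1 then row1 else row0, x.2).
Definition bot_emb n (x : node n) : tnode n := (if x.1 then row2 else row1, x.2).
Definition out_emb n (x : node n) : tnode n := (if x.1 then row2 else row0, x.2).

Definition stack_edge n (D1 D2 : {set {set node n}}) : rel (tnode n) :=
  fun u v =>
    [exists x, exists y, [&& top_emb x == u, top_emb y == v & same_block D1 x y]]
 || [exists x, exists y, [&& bot_emb x == u, bot_emb y == v & same_block D2 x y]].

Definition comp_raw n (D1 D2 : {set {set node n}}) : {set {set node n}} :=
  equivalence_partition
    (fun x y => connect (stack_edge D1 D2) (out_emb x) (out_emb y)) [set: node n].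

Definition mid_count n (D1 D2 : {set {set node n}}) : nat :=
  #|[set C in equivalence_partition (connect (stack_edge D1 D2)) [set: tnode n]
      | C \subset [set u : tnode n | u.1 == row1]]|.

(* The partition algebra P_n(R, delta): the free R-module on diagrams,
   represented by coefficient functions, with the stacking product. *)
Definition pmul (R : comPzRingType) (delta : R) n
    (x y : {ffun diagram n -> R}) : {ffun diagram n -> R} :=
  [ffun d : diagram n => \sum_(d1 : diagram n) \sum_(d2 : diagram n |
        comp_raw (val d1) (val d2) == val d)
        x d1 * y d2 * delta ^+ mid_count (val d1) (val d2)].

(* J_m: span of the diagrams having, among the right nodes n-m+1..n
   (i.e. (true, i) with n - m <= i), a singleton block or two distinct
   nodes in the same block. *)
Definition Jdiag n m (d : diagram n) : bool :=
  [exists i : 'I_n, (n - m <= i)%N && ([set (true, i)] \in val d)]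
  || [exists i : 'I_n, exists j : 'I_n,
        [&& (n - m <= i)%N, (n - m <= j)%N, i != j
          & same_block (val d) (true, i) (true, j)]].

Definition inJ (R : comPzRingType) n m (x : {ffun diagram n -> R}) : Prop :=
  forall d : diagram n, x d != 0 -> Jdiag m d.

(* Embedding S_m -> P_m -> P_n: sigma in 'S_m is the diagram with blocks
   {-i, sigma(i)}; relabel +-i |-> +-(n-m+i) and adjoin blocks {-i, i}, i <= n-m. *)
Definition perm_nat m (s : 'S_m) (t : nat) : nat :=
  if (insub t : option 'I_m) is Some i then val (s i) else t.
Definition ext_nat n m (s : 'S_m) (k : nat) : nat :=
  if (n - m <= k)%N then (n - m + perm_nat s (k - (n - m)))%N else k.
Definition ext_perm n m (s : 'S_m) (j : 'I_n) : 'I_n := insubd j (@ext_nat n m s j).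
Definition pdiag n m (s : 'S_m) : {set {set node n}} :=
  [set [set (false, j); (true, @ext_perm n m s j)] | j : 'I_n].

Definition gembed (R : comPzRingType) n m (a : {ffun 'S_m -> R})
  : {ffun diagram n -> R} :=
  [ffun d : diagram n => \sum_(s : 'S_m | @pdiag n m s == val d) a s].

Definition pn_ract (R : comPzRingType) (delta : R) n m
  (x : {ffun diagram n -> R}) (a : {ffun 'S_m -> R}) : {ffun diagram n -> R} :=
  pmul delta x (@gembed R n m a).

(* Main.v *)
Require Import Defs.
From mathcomp Require Import all_boot all_order all_algebra all_fingroup.
From mathcomp Require Import zify.
Set Implicit Arguments. Unset Strict Implicit. Unset Printing Implicit Defensive.
Import GRing.Theory.
Local Open Scope ring_scope.

Lemma perm_nat_lt m (s : 'S_m) u : (perm_nat s u < m)%N = (u < m)%N.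
Proof.
rewrite /perm_nat; case: insubP => [i _ <-|]; first by rewrite !ltn_ord.
by move/negbTE => ->.
Qed.

Lemma perm_nat1 m u : perm_nat (1 : 'S_m) u = u.
Proof. by rewrite /perm_nat; case: insubP => [i _ <-|//]; rewrite perm1. Qed.

Lemma perm_natM m (s t : 'S_m) u : perm_nat (s * t) u = perm_nat t (perm_nat s u).
Proof.
rewrite /perm_nat; case: insubP => [i _ Hi|Hu].
  by rewrite permM valK.
by rewrite insubN.
Qed.

Lemma perm_nat_small m (s : 'S_m) u : (m <= u)%N -> perm_nat s u = u.
Proof. by move=> H; rewrite /perm_nat insubN // -leqNgt. Qed.

Lemma ext_nat1 n m k : @ext_nat n m 1 k = k.
Proof. by rewrite /ext_nat perm_nat1; case: ifP => // H; rewrite subnKC. Qed.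

Lemma ext_nat_ge n m (s : 'S_m) k : (n - m <= @ext_nat n m s k)%N = (n - m <= k)%N.
Proof. by rewrite /ext_nat; case: ifP => H; rewrite ?leq_addr ?H. Qed.

Lemma ext_natM n m (s t : 'S_m) k : @ext_nat n m (s * t) k = ext_nat n t (ext_nat n s k).
Proof.
rewrite /ext_nat; case: ifP => H; last by rewrite H.
by rewrite leq_addr addKn perm_natM.
Qed.

Lemma ext_nat_lt n m (s : 'S_m) k : (m <= n)%N -> (@ext_nat n m s k < n)%N = (k < n)%N.
Proof.
move=> hmn; rewrite /ext_nat; case: ifP => H //.
have P := perm_nat_lt s (k - (n - m)).
case: (ltnP (k - (n - m)) m) => Hk.
  by rewrite Hk in P; apply/idP/idP => _; lia.
by rewrite perm_nat_small // subnKC.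
Qed.

Lemma ext_permE n m (s : 'S_m) (j : 'I_n) : (m <= n)%N -> val (@ext_perm n m s j) = ext_nat n s j.
Proof. by move=> hmn; rewrite /ext_perm insubdK // unfold_in /= ext_nat_lt. Qed.

Lemma ext_perm1 n m (j : 'I_n) : (m <= n)%N -> @ext_perm n m 1 j = j.
Proof. by move=> h; apply: val_inj; rewrite ext_permE // ext_nat1. Qed.

Lemma ext_permM n m (s t : 'S_m) (j : 'I_n) : (m <= n)%N ->
  @ext_perm n m (s * t) j = ext_perm t (ext_perm s j).
Proof. by move=> h; apply: val_inj; rewrite !ext_permE // ext_natM. Qed.

Lemma ext_permK n m (s : 'S_m) (j : 'I_n) : (m <= n)%N ->
  @ext_perm n m s^-1 (ext_perm s j) = j.
Proof. by move=> h; rewrite -ext_permM // mulgV ext_perm1. Qed.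

Lemma ext_permKV n m (s : 'S_m) (j : 'I_n) : (m <= n)%N ->
  @ext_perm n m s (ext_perm s^-1 j) = j.
Proof. by move=> h; rewrite -ext_permM // mulVg ext_perm1. Qed.

Lemma ext_perm_ge n m (s : 'S_m) (j : 'I_n) : (m <= n)%N ->
  (n - m <= @ext_perm n m s j)%N = (n - m <= j)%N.
Proof. by move=> h; rewrite ext_permE // ext_nat_ge. Qed.

Lemma ext_perm_small n m (s : 'S_m) (j : 'I_n) : (m <= n)%N ->
  (j < n - m)%N -> @ext_perm n m s j = j.
Proof. by move=> h hj; apply: val_inj; rewrite ext_permE // /ext_nat leqNgt hj. Qed.

(* the block index function of the permutation diagram *)
Definition gs n m (s : 'S_m) (x : node n) : 'I_n :=
  if x.1 then ext_perm s^-1 x.2 else x.2.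

Lemma pdiag_blockE n m (s : 'S_m) (j : 'I_n) : (m <= n)%N ->
  [set (false, j); (true, @ext_perm n m s j)] = [set y | gs s y == j].
Proof.
move=> h; apply/setP => [[b i]]; rewrite !inE /gs /= !xpair_eqE /=.
case: b => /=; last by rewrite orbF.
by apply/eqP/eqP => [->|<-]; rewrite ?ext_permK ?ext_permKV.
Qed.

Lemma pdiag_preim n m (s : 'S_m) : (m <= n)%N ->
  pdiag n s = preim_partition (@gs n m s) [set: node n].
Proof.
move=> h; rewrite /pdiag /preim_partition /equivalence_partition.
apply/setP => B; apply/imsetP/imsetP => [[j _ ->]|[x _ ->]].
  exists (false, j) => //; rewrite pdiag_blockE //; apply/setP => y; rewrite !inE /= eq_sym.
  by [].
exists (gs s x) => //; rewrite pdiag_blockE //; apply/setP => y; by rewrite !inE eq_sym.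
Qed.

Lemma pdiag_diag n m (s : 'S_m) : (m <= n)%N -> is_diagram (pdiag n s).
Proof. by move=> h; rewrite /is_diagram pdiag_preim // preim_partitionP. Qed.

Lemma pdiag_sb n m (s : 'S_m) x y : (m <= n)%N ->
  same_block (pdiag n s) x y = (@gs n m s x == gs s y).
Proof.
move=> h; rewrite /same_block pdiag_preim // /preim_partition.
by rewrite pblock_equivalence_partition // => a b c _ _ _; split=> // /eqP ->.
Qed.

Lemma sb_equiv n (d : diagram n) : equivalence_rel (same_block (val d)).
Proof.
move=> x y z; have := pblock_equivalence (valP d).
by move=> /(_ x y z); rewrite !inE; apply.
Qed.

Lemma sb_refl n (d : diagram n) x : same_block (val d) x x.
Proof. by have [] := sb_equiv d x x x. Qed.

Lemma sb_sym n (d : diagram n) x y : same_block (val d) x y -> same_block (val d) y x.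
Proof. by move=> H; have [_ /(_ H) <-] := sb_equiv d x y x; apply: sb_refl. Qed.

Lemma sb_trans n (d : diagram n) x y z : same_block (val d) x y ->
  same_block (val d) y z -> same_block (val d) x z.
Proof. by move=> H; have [_ /(_ H) ->] := sb_equiv d x y z. Qed.

Lemma diag_eq n (d1 d2 : diagram n) :
  (forall x y, same_block (val d1) x y = same_block (val d2) x y) -> d1 = d2.
Proof.
move=> H; apply: val_inj.
rewrite -(equivalence_partition_pblock (valP d1)) -(equivalence_partition_pblock (valP d2)).
rewrite /equivalence_partition; apply: eq_imset => x; apply/setP => y.
by rewrite !inE; have := H x y; rewrite /same_block => ->.
Qed.

Definition hinv n m (s : 'S_m) (x : node n) : node n :=
  (x.1, if x.1 then ext_perm s^-1 x.2 else x.2).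
Definition piT n m (s : 'S_m) (u : tnode n) : node n :=
  if u.1 == Defs.row0 then (false, u.2) else if u.1 == Defs.row1 then (true, u.2)
  else (true, ext_perm s^-1 u.2).

Lemma piT_top n m (s : 'S_m) (x : node n) : piT s (top_emb x) = x.
Proof. by case: x => [[] j]. Qed.

Lemma piT_bot n m (s : 'S_m) (x : node n) : piT s (bot_emb x) = (true, gs s x).
Proof. by case: x => [[] j]. Qed.

Lemma piT_out n m (s : 'S_m) (x : node n) : piT s (out_emb x) = hinv s x.
Proof. by case: x => [[] j]. Qed.

Lemma edge_pi n m (hmn : (m <= n)%N) (d : diagram n) (s : 'S_m) u v :
  stack_edge (val d) (pdiag n s) u v -> same_block (val d) (piT s u) (piT s v).
Proof.
case/orP => /existsP [x /existsP [y /and3P [/eqP <- /eqP <- H]]].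
  by rewrite !piT_top.
by rewrite !piT_bot; move: H; rewrite pdiag_sb // => /eqP ->; apply: sb_refl.
Qed.

Lemma conn_pi n m (hmn : (m <= n)%N) (d : diagram n) (s : 'S_m) u v :
  connect (stack_edge (val d) (pdiag n s)) u v -> same_block (val d) (piT s u) (piT s v).
Proof.
move/connectP => [p]; elim: p u => [|w p IH] u /=; first by move=> _ ->; apply: sb_refl.
by case/andP => e pth lst; apply: sb_trans (edge_pi hmn e) (IH _ pth lst).
Qed.

Lemma conn_out n m (hmn : (m <= n)%N) (d : diagram n) (s : 'S_m) x y :
  connect (stack_edge (val d) (pdiag n s)) (out_emb x) (out_emb y)
  = same_block (val d) (hinv s x) (hinv s y).
Proof.
apply/idP/idP; first by move/(conn_pi hmn); rewrite !piT_out.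
move=> H.
have e1 : connect (stack_edge (val d) (pdiag n s)) (out_emb x) (top_emb (hinv s x)).
  case: x {H} => [[] j]; last exact: connect0.
  apply: connect1; apply/orP; right.
  apply/existsP; exists (true, j); apply/existsP; exists (false, ext_perm s^-1 j).
  by rewrite pdiag_sb // /gs /= !eqxx.
have e2 : connect (stack_edge (val d) (pdiag n s)) (top_emb (hinv s y)) (out_emb y).
  case: y {H e1} => [[] j]; last exact: connect0.
  apply: connect1; apply/orP; right.
  apply/existsP; exists (false, ext_perm s^-1 j); apply/existsP; exists (true, j).
  by rewrite pdiag_sb // /gs /= !eqxx.
have e3 : stack_edge (val d) (pdiag n s) (top_emb (hinv s x)) (top_emb (hinv s y)).
  apply/orP; left; apply/existsP; exists (hinv s x); apply/existsP; exists (hinv s y).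
  by rewrite !eqxx H.
exact: connect_trans e1 (connect_trans (connect1 e3) e2).
Qed.

Lemma comp_part n m (hmn : (m <= n)%N) (d : diagram n) (s : 'S_m) :
  is_diagram (comp_raw (val d) (pdiag n s)).
Proof.
apply: equivalence_partitionP => x y z _ _ _ /=; rewrite !conn_out //.
exact: sb_equiv.
Qed.

Definition act n m (hmn : (m <= n)%N) (d : diagram n) (s : 'S_m) : diagram n :=
  exist _ (comp_raw (val d) (pdiag n s)) (comp_part hmn d s).

Lemma sb_act n m (hmn : (m <= n)%N) (d : diagram n) (s : 'S_m) x y :
  same_block (val (act hmn d s)) x y = same_block (val d) (hinv s x) (hinv s y).
Proof.
rewrite /same_block /= /comp_raw pblock_equivalence_partition ?inE //.
  by rewrite conn_out.
by move=> a b c _ _ _ /=; rewrite !conn_out //; apply: sb_equiv.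
Qed.

Lemma actE n m (hmn : (m <= n)%N) (d : diagram n) (s : 'S_m) :
  val (act hmn d s) = comp_raw (val d) (pdiag n s).
Proof. by []. Qed.

Opaque act.

Lemma hinvM n m (hmn : (m <= n)%N) (s t : 'S_m) (x : node n) :
  hinv s (hinv t x) = hinv (s * t) x.
Proof. case: x => [[] j]; rewrite /hinv /=; last by []. by rewrite invMg (ext_permM _ _ _ hmn). Qed.

Lemma hinv1 n m (hmn : (m <= n)%N) (x : node n) : hinv (1 : 'S_m) x = x.
Proof. case: x => [[] j]; rewrite /hinv /=; last by []. by rewrite invg1 (ext_perm1 _ hmn). Qed.

Lemma actM n m (hmn : (m <= n)%N) (d : diagram n) (s t : 'S_m) :
  act hmn (act hmn d s) t = act hmn d (s * t).
Proof.
apply: diag_eq => x y.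
etransitivity; first exact: sb_act.
etransitivity; first exact: sb_act.
symmetry; etransitivity; first exact: sb_act.
by rewrite (hinvM hmn s t x) (hinvM hmn s t y).
Qed.

Lemma act1 n m (hmn : (m <= n)%N) (d : diagram n) : act hmn d 1 = d.
Proof.
apply: diag_eq => x y.
etransitivity; first exact: sb_act.
by rewrite (hinv1 hmn x) (hinv1 hmn y).
Qed.

Lemma mid0 n m (hmn : (m <= n)%N) (d : diagram n) (s : 'S_m) :
  mid_count (val d) (pdiag n s) = 0%N.
Proof.
rewrite /mid_count; set S := [set C in _ | _].
suff -> : S = set0 by rewrite cards0.
apply/setP => C; rewrite !inE; apply/negbTE/andP => [[/imsetP [u _ ->] sub]].
case: u sub => r j sub.
case Hr: (r == Defs.row1).
  have : (Defs.row2, ext_perm s j) \in [set y in [set: tnode n] | connect (stack_edge (val d) (pdiag n s)) (r, j) y].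
    rewrite !inE /=; apply: connect1; apply/orP; right.
    apply/existsP; exists (false, j); apply/existsP; exists (true, ext_perm s j).
    by rewrite pdiag_sb // /gs /= ext_permK // (eqP Hr) !eqxx.
  by move/(subsetP sub); rewrite inE.
have : (r, j) \in [set y in [set: tnode n] | connect (stack_edge (val d) (pdiag n s)) (r, j) y].
  by rewrite !inE connect0.
by move/(subsetP sub); rewrite inE /= Hr.
Qed.

Definition hmap n m (s : 'S_m) (x : node n) : node n :=
  (x.1, if x.1 then ext_perm s x.2 else x.2).

Lemma hinv_hmap n m (hmn : (m <= n)%N) (s : 'S_m) (x : node n) : hinv s (hmap s x) = x.
Proof. case: x => [[] j]; rewrite /hinv /hmap /=; last by []. by rewrite (ext_permK _ _ hmn). Qed.

Lemma hmap_hinv n m (hmn : (m <= n)%N) (s : 'S_m) (x : node n) : hmap s (hinv s x) = x.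
Proof. case: x => [[] j]; rewrite /hinv /hmap /=; last by []. by rewrite (ext_permKV _ _ hmn). Qed.

Lemma cover_d n (d : diagram n) x : x \in cover (val d).
Proof. by case/and3P: (valP d) => /eqP -> _ _; rewrite inE. Qed.

Lemma singleton_in n (d : diagram n) x :
  ([set x] \in val d) = (pblock (val d) x == [set x]).
Proof.
case/and3P: (valP d) => _ tI _.
apply/idP/eqP => [H|<-]; last by apply: pblock_mem; apply: cover_d.
by apply: def_pblock => //; rewrite inE.
Qed.

Lemma Jsing n m (d : diagram n) (i : 'I_n) : (n - m <= i)%N -> [set (true, i)] \in val d ->
  Jdiag m d.
Proof. by move=> hi H; apply/orP; left; apply/existsP; exists i; rewrite hi H. Qed.

Lemma Jpair n m (d : diagram n) (i j : 'I_n) : (n - m <= i)%N -> (n - m <= j)%N -> i != j ->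
  same_block (val d) (true, i) (true, j) -> Jdiag m d.
Proof.
move=> hi hj hij H; apply/orP; right; apply/existsP; exists i; apply/existsP; exists j.
by rewrite hi hj hij H.
Qed.

Lemma J_act n m (hmn : (m <= n)%N) (d : diagram n) (s : 'S_m) :
  Jdiag m (act hmn d s) -> Jdiag m d.
Proof.
case/orP => [/existsP [i /andP [hi hsing]] | /existsP [i /existsP [j /and4P [hi hj hij hsb]]]].
  apply: (@Jsing _ _ _ (ext_perm s^-1 i)); first by rewrite (ext_perm_ge _ _ hmn).
  rewrite singleton_in; apply/eqP/setP => y; rewrite inE; apply/idP/eqP => [Hy|->].
    have H1 : same_block (val (act hmn d s)) (true, i) (hmap s y).
      move: Hy; rewrite -/(same_block _ _ _) => Hy.
      etransitivity; first exact: sb_act.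
      by rewrite hinv_hmap.
    move: hsing; rewrite singleton_in => /eqP hsing.
    move: H1; rewrite /same_block hsing inE => /eqP H1.
    by rewrite -(hinv_hmap hmn s y) H1.
  by rewrite mem_pblock cover_d.
apply: (@Jpair _ _ _ (ext_perm s^-1 i) (ext_perm s^-1 j)).
- by rewrite (ext_perm_ge _ _ hmn).
- by rewrite (ext_perm_ge _ _ hmn).
- apply: contra hij => /eqP H.
  by rewrite -(ext_permKV s i hmn) H (ext_permKV s j hmn).
- by move: hsb; rewrite sb_act.
Qed.

Lemma free_act n m (hmn : (m <= n)%N) (r : diagram n) (s t : 'S_m) :
  ~~ Jdiag m r -> act hmn r s = act hmn r t -> s = t.
Proof.
move=> nJ Est.
have key : forall j : 'I_n, (n - m <= j)%N -> ext_perm s j = ext_perm t j.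
  move=> j hj.
  have hns : pblock (val r) (true, j) != [set (true, j)].
    by rewrite -singleton_in; apply: contra nJ; apply: Jsing.
  have [z /andP [Hz nz]] : exists z, (z \in pblock (val r) (true, j)) && (z != (true, j)).
    apply/existsP; apply: contraNT hns => /existsPn H; apply/eqP/setP => z.
    rewrite inE; apply/idP/eqP => [Hz|->]; last by rewrite mem_pblock cover_d.
    by move: (H z); rewrite Hz /= negbK => /eqP.
  have Hfix : forall u : 'S_m, hmap u z = z.
    move=> u; case: z Hz nz => [[] k] Hz nz; rewrite /hmap /=; last by [].
    case: (ltnP k (n - m)) => hk; first by rewrite (ext_perm_small _ hmn hk).
    exfalso; move/negP: nJ; apply; apply: (@Jpair _ _ _ j k hj hk _ Hz).
    by apply: contra nz => /eqP ->.
  have Hs : forall u : 'S_m, same_block (val (act hmn r u)) (true, ext_perm u j) z.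
    move=> u; etransitivity; first exact: sb_act.
    have hz : hinv u z = z by rewrite -{1}(Hfix u) (hinv_hmap hmn).
    rewrite hz.
    by have -> : hinv u (true, ext_perm u j) = (true, j) by rewrite /hinv /= (ext_permK _ _ hmn).
  have H2 : same_block (val (act hmn r s)) (true, ext_perm s j) (true, ext_perm t j).
    apply: sb_trans (Hs s) _; apply: sb_sym; rewrite Est; exact: Hs.
  move: H2; rewrite sb_act.
  have -> : hinv s (true, ext_perm s j) = (true, j) by rewrite /hinv /= (ext_permK _ _ hmn).
  rewrite /hinv /= => H2.
  case: (eqVneq j (ext_perm s^-1 (ext_perm t j))) => [E|E].
    by rewrite {1}E (ext_permKV _ _ hmn).
  exfalso; move/negP: nJ; apply; apply: (@Jpair _ _ _ j (ext_perm s^-1 (ext_perm t j)) hj _ E H2).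
  by rewrite !(ext_perm_ge _ _ hmn).
apply/permP => i.
have hlt : (n - m + i < n)%N.
  have := ltn_ord i; lia.
have := key (Ordinal hlt) (leq_addr _ _).
move/(congr1 val); rewrite !(ext_permE _ _ hmn) /ext_nat /= leq_addr addKn /perm_nat.
rewrite !valK => /addnI E.
exact: val_inj E.
Qed.

Definition orb n m (hmn : (m <= n)%N) (d : diagram n) : {set diagram n} :=
  [set act hmn d s | s : 'S_m].
Definition canon n m (hmn : (m <= n)%N) (d : diagram n) : diagram n :=
  odflt d [pick e in orb hmn d].
Definition Reps n m (hmn : (m <= n)%N) : {set diagram n} :=
  [set d : diagram n | ~~ Jdiag m d & canon hmn d == d].

Lemma canon_in n m (hmn : (m <= n)%N) (d : diagram n) : canon hmn d \in orb hmn d.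
Proof.
rewrite /canon; case: pickP => [e He //|H].
by have := H d; rewrite /orb; move/negbT/imsetP; case; exists (1%g : 'S_m) => //; rewrite act1.
Qed.

Lemma orb_act n m (hmn : (m <= n)%N) (d : diagram n) (s : 'S_m) :
  orb hmn (act hmn d s) = orb hmn d.
Proof.
apply/setP => e; apply/imsetP/imsetP => [[t _ ->]|[t _ ->]].
  by exists (s * t)%g => //; rewrite actM.
by exists (s^-1 * t)%g => //; rewrite actM mulKVg.
Qed.

Lemma canon_act n m (hmn : (m <= n)%N) (d : diagram n) (s : 'S_m) :
  canon hmn (act hmn d s) = canon hmn d.
Proof.
rewrite /canon orb_act; case: pickP => [//|H].
by have := H d; rewrite /orb; move/negbT/imsetP; case; exists (1%g : 'S_m) => //; rewrite act1.
Qed.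

Lemma nJ_act n m (hmn : (m <= n)%N) (d : diagram n) (s : 'S_m) :
  ~~ Jdiag m d -> ~~ Jdiag m (act hmn d s).
Proof. by apply: contra; apply: J_act. Qed.

Lemma decomp_ex n m (hmn : (m <= n)%N) (d : diagram n) :
  ~~ Jdiag m d -> exists2 r, r \in Reps hmn & exists s, act hmn r s = d.
Proof.
move=> nJ; have /imsetP [s _ Ec] := canon_in hmn d.
exists (canon hmn d).
  rewrite inE Ec nJ_act //=; apply/eqP.
  by rewrite canon_act.
exists (s^-1)%g; rewrite Ec actM mulgV; exact: act1.
Qed.

Lemma decomp_uniq n m (hmn : (m <= n)%N) (r r' : diagram n) (s s' : 'S_m) :
  r \in Reps hmn -> r' \in Reps hmn -> act hmn r s = act hmn r' s' -> r = r' /\ s = s'.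
Proof.
rewrite !inE => /andP [nJ /eqP cr] /andP [_ /eqP cr'] E.
have rr : r = r'.
  by rewrite -cr -cr' -(canon_act hmn r s) -(canon_act hmn r' s') E.
split; first exact: rr.
subst r'.
exact: free_act nJ E.
Qed.

Definition pd n m (hmn : (m <= n)%N) (s : 'S_m) : diagram n :=
  exist _ (pdiag n s) (pdiag_diag s hmn).

Lemma pn_ract_basis (R : comPzRingType) (delta : R) n m (hmn : (m <= n)%N)
  (r : diagram n) (a : {ffun 'S_m -> R}) (d : diagram n) :
  pn_ract delta [ffun e : diagram n => ((e == r)%:R : R)] a d
  = \sum_(s : 'S_m) (if act hmn r s == d then a s else 0).
Proof.
rewrite /pn_ract /pmul ffunE (bigD1 r) //= [X in _ + X]big1 ?addr0; last first.
  by move=> d1 hd1; apply: big1 => d2 _; rewrite ffunE (negbTE hd1) !mul0r.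
rewrite ffunE eqxx.
have -> : ((true : nat)%:R : R) = 1 by [].
under eq_bigr => d2 _ do rewrite mul1r ffunE mulr_suml.
rewrite (exchange_big_dep xpredT) //=.
apply: eq_bigr => s _.
rewrite big_mkcond (bigD1 (pd hmn s)) //= big1 ?addr0; last first.
  move=> d2 hd2; case: ifP => // /andP [_ /eqP E]; case/eqP: hd2.
  by apply: val_inj; rewrite /= E.
rewrite eqxx andbT.
have -> : mid_count (sval r) (pdiag n s) = 0%N by exact: mid0.
have -> : comp_raw (sval r) (pdiag n s) = sval (act hmn r s) by exact: (esym (actE hmn r s)).
by rewrite expr0 mulr1.
Qed.

Lemma eval_sum (R : comPzRingType) n m (hmn : (m <= n)%N)
  (a : 'I_#|Reps hmn| -> {ffun 'S_m -> R}) (d : diagram n) i0 s0 :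
  act hmn (enum_val i0) s0 = d ->
  \sum_(i < #|Reps hmn|) \sum_(s : 'S_m) (if act hmn (enum_val i) s == d then a i s else 0)
  = a i0 s0.
Proof.
move=> Ed.
rewrite (bigD1 i0) //= [X in _ + X]big1 ?addr0; last first.
  move=> i hi; apply: big1 => s _; case: eqP => // E; exfalso.
  have [E1 _] := decomp_uniq (enum_valP i) (enum_valP i0) (etrans E (esym Ed)).
  by move/negP: hi; apply; apply/eqP; apply: enum_val_inj.
rewrite (bigD1 s0) //= [X in _ + X]big1 ?addr0; last first.
  move=> s hs; case: eqP => // E; exfalso.
  have [_ E1] := decomp_uniq (enum_valP i0) (enum_valP i0) (etrans E (esym Ed)).
  by move/negP: hs; apply; apply/eqP.
by case: eqP => // E; case: E.
Qed.

Unset Implicit Arguments.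
Set Strict Implicit.

Theorem lemma5p2 (R : comPzRingType) (delta : R) (n m : nat) (hmn : (m <= n)%N) :
  exists (k : nat) (b : 'I_k -> {ffun diagram n -> R}),
    (forall x : {ffun diagram n -> R},
       exists a : 'I_k -> {ffun 'S_m -> R},
         inJ m (x - \sum_(i < k) pn_ract delta (b i) (a i)))
    /\ (forall a a' : 'I_k -> {ffun 'S_m -> R},
         inJ m (\sum_(i < k) pn_ract delta (b i) (a i)
                - \sum_(i < k) pn_ract delta (b i) (a' i)) ->
         forall i, a i = a' i).
Proof.
exists #|Reps hmn|, (fun i => [ffun e : diagram n => ((e == enum_val i)%:R : R)]).
split.
  move=> x; exists (fun i => [ffun s => x (act hmn (enum_val i) s)]).
  move=> d; apply: contraR => nJ.
  have [r Hr [s Es]] := decomp_ex hmn nJ.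
  have Ed : act hmn (enum_val (enum_rank_in Hr r)) s = d by rewrite enum_rankK_in.
  rewrite !ffunE sum_ffunE.
  under eq_bigr => i _ do rewrite (pn_ract_basis delta hmn).
  rewrite (eval_sum _ Ed) ffunE.
  by rewrite Ed subrr.
move=> a a' H i; apply/ffunP => s.
have nJ : ~~ Jdiag m (act hmn (enum_val i) s).
  by apply: nJ_act; have := enum_valP i; rewrite inE => /andP [].
have := H (act hmn (enum_val i) s); rewrite !ffunE !sum_ffunE.
under eq_bigr => j _ do rewrite (pn_ract_basis delta hmn).
under [X in _ - X]eq_bigr => j _ do rewrite (pn_ract_basis delta hmn).
rewrite !(eval_sum _ (erefl _)) => H1.
apply/eqP; rewrite -subr_eq0; exact: (contraR H1 nJ).
Qed.
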